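(* Let $\Upsilon$ be a label cover instance and $\Gamma=(\tilde G,\tilde H)$ the random instance produced by the reduction described in the context. For every injective map $\varphi:V_{\tilde G}\to V_{\tilde H}$ (note that $V_{\tilde G}$ and $V_{\tilde H}$ do not depend on the randomness), $$\mathbb{E}[\mathrm{Val}_{QAP}(\Gamma,\varphi)]\le \alpha|E_G|N^2\,(\mathrm{OPT}_{LC}(\Upsilon)+\alpha).$$
   Context: A label cover instance $\Upsilon=(G=(V_G,E_G),\pi,[k])$ consists of a graph $G$ with $n=|V_G|$ vertices and edge set $E_G$, a label set $[k]=\{0,\dots,k-1\}$, and for each edge $(u,v)\in E_G$ a set $\pi_{uv}\subseteq[k]\times[k]$ of accepted label pairs. For a labeling $\Lambda:V_G\to[k]$, $\mathrm{Val}_{LC}(\Upsilon,\Lambda)=\frac{1}{|E_G|}\sum_{(u,v)\in E_G}\mathbf{1}[(\Lambda(u),\Lambda(v))\in\pi_{uv}]$, and $\mathrm{OPT}_{LC}(\Upsilon)=\max_\Lambda\mathrm{Val}_{LC}(\Upsilon,\Lambda)$. The reduction: let $N=\lceil n^4|E_G|k^5\rceil$ and $\alpha=1/n$. Set $V_{\tilde G}=V_G\times[N]$ and $V_{\tilde H}=V_G\times[k]\times[N]$. For every edge $(u,v)$ of $G$, independently choose a random set $\mathcal{E}_{uv}\subseteq[N]\times[N]$ containing each pair independently with probability $\alpha$. Let $E_{\tilde G}=\{((u,i),(v,j)):(u,v)\in E_G,(i,j)\in\mathcal{E}_{uv}\}$ and $E_{\tilde H}=\{((u,x,i),(v,y,j)):(u,v)\in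 E_G,(i,j)\in\mathcal{E}_{uv},(x,y)\in\pi_{uv}\}$. For an injective map $\varphi:V_{\tilde G}\to V_{\tilde H}$, $\mathrm{Val}_{QAP}(\Gamma,\varphi)=\sum_{(a,b)\in E_{\tilde G}}\mathbf{1}[(\varphi(a),\varphi(b))\in E_{\tilde H}]$. *)

(* Defs.v *)
From mathcomp Require Import all_boot all_order all_algebra.
Set Implicit Arguments. Unset Strict Implicit. Unset Printing Implicit Defensive.
Import Order.TTheory GRing.Theory Num.Theory.
Local Open Scope ring_scope.

(* A label cover instance: vertex type V (n = #|V|), directed edge set
   E ⊆ V × V without loops, label set 'I_k, constraints pi : edge -> {set 'I_k * 'I_k}. *)
Definition loopless (V : finType) (E : {set V * V}) : bool :=
  [forall e in E, e.1 != e.2].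

Section LC.
Variables (R : realFieldType) (V : finType) (k : nat).
Variables (E : {set V * V}) (pi : V * V -> {set 'I_k * 'I_k}).

Definition Val_LC (L : {ffun V -> 'I_k}) : R :=
  (#|[set e in E | (L e.1, L e.2) \in pi e]|)%:R / (#|E|)%:R.

(* max over all labelings (0 if there is none) *)
Definition OPT_LC : R := \big[Num.max/0]_(L : {ffun V -> 'I_k}) Val_LC L.

Definition redN : nat := (#|V| ^ 4 * #|E| * k ^ 5)%N.
Definition redAlpha : R := (#|V|%:R)^-1.

(* random choice: S e = \mathcal{E}_e ⊆ [N] × [N] for each edge e (S e = set0 off edges) *)
Definition choiceT := {ffun V * V -> {set 'I_redN * 'I_redN}}.

Definition probS (S : choiceT) : R :=
  \prod_(e in E) \prod_(p : 'I_redN * 'I_redN)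
      (if p \in S e then redAlpha else 1 - redAlpha)
  * \prod_(e in ~: E) (S e == set0)%:R.

Definition EGt (S : choiceT) : {set (V * 'I_redN) * (V * 'I_redN)} :=
  [set ab | ((ab.1.1, ab.2.1) \in E) && ((ab.1.2, ab.2.2) \in S (ab.1.1, ab.2.1))].

Definition EHt (S : choiceT) :
    {set (V * 'I_k * 'I_redN) * (V * 'I_k * 'I_redN)} :=
  [set cd | [&& (cd.1.1.1, cd.2.1.1) \in E,
               (cd.1.2, cd.2.2) \in S (cd.1.1.1, cd.2.1.1) &
               (cd.1.1.2, cd.2.1.2) \in pi (cd.1.1.1, cd.2.1.1)]].

Definition Val_QAP (S : choiceT) (phi : V * 'I_redN -> V * 'I_k * 'I_redN) : nat :=
  \sum_(ab in EGt S) ((phi ab.1, phi ab.2) \in EHt S).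

Definition expVal_QAP (phi : V * 'I_redN -> V * 'I_k * 'I_redN) : R :=
  \sum_(S : choiceT) probS S * (Val_QAP S phi)%:R.
End LC.

(* Main.v *)
Require Import Defs.
From mathcomp Require Import all_boot all_order all_algebra ring lra.
Import Order.TTheory GRing.Theory Num.Theory.
Local Open Scope ring_scope.


Lemma prod_constT (R : realFieldType) (T : finType) (c : R) :
  \prod_(w : T) c = c ^+ #|T|.
Proof. by rewrite prodr_const. Qed.

Lemma sum_set_prod (R : realFieldType) (T : finType) (h : T -> bool -> R) :
  \sum_(X : {set T}) \prod_(t : T) h t (t \in X) =
  \prod_(t : T) (h t true + h t false).
Proof.
have -> : \prod_(t : T) (h t true + h t false) = \prod_(t : T) \sum_(b : bool) h t b.
  by apply: eq_bigr => t _; rewrite big_bool.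
rewrite bigA_distr_bigA /=.
rewrite (reindex (fun g : {ffun T -> bool} => [set t | g t])) /=.
  by apply: eq_bigr => g _; apply: eq_bigr => t _; rewrite inE.
exists (fun X : {set T} => [ffun t => t \in X]) => [g _|X _].
  by apply/ffunP => t; rewrite ffunE inE.
by apply/setP => t; rewrite inE ffunE.
Qed.

Lemma prod_if_card (R : realFieldType) (T : finType) (Q : {set T}) (a : R) :
  \prod_(x : T) (if x \in Q then a else 1) = a ^+ #|Q|.
Proof. by rewrite -big_mkcond /= prodr_const. Qed.

Lemma sum_ind_eq (R : realFieldType) (T : finType) (i : T) :
  \sum_(y : T) ((y == i)%:R : R) = 1.
Proof.
by rewrite (bigD1 i) //= eqxx big1 ?addr0 // => y /negbTE ->.
Qed.

Lemma le_bigmaxR (R : realFieldType) (T : finType) (F : T -> R) (t : T) :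
  F t <= \big[Num.max/0]_(x : T) F x.
Proof.
have : t \in index_enum T by rewrite mem_index_enum.
elim: (index_enum T) => [//|x s IH]; rewrite big_cons in_cons.
case/orP => [/eqP ->|/IH H]; rewrite le_max ?lexx //.
by rewrite H orbT.
Qed.

Lemma expect_ind (R : realFieldType) (V : finType) (k : nat) (E : {set V * V})
  (Q : {set (V * V) * ('I_(@redN V k E) * 'I_(@redN V k E))})
  (HQ : forall x, x \in Q -> x.1 \in E) :
  \sum_(S : @choiceT V k E) @probS R V k E S *
     \prod_(x in Q) ((x.2 \in S x.1)%:R : R) = (@redAlpha R V) ^+ #|Q|.
Proof.
set a := @redAlpha R V.
pose w (b : bool) : R := if b then a else 1 - a.
pose K e (X : {set 'I_(@redN V k E) * 'I_(@redN V k E)}) : R :=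
  (if e \in E then \prod_p w (p \in X) else (X == set0)%:R) *
  \prod_p (if (e, p) \in Q then (p \in X)%:R else 1).
have HS : forall S : @choiceT V k E, @probS R V k E S *
     \prod_(x in Q) ((x.2 \in S x.1)%:R : R) = \prod_e K e (S e).
  move=> S; rewrite /K big_split /=; congr (_ * _).
    rewrite /probS (big_mkcond (fun e => e \in E)) (big_mkcond (fun e => e \in ~: E)).
    rewrite -big_split /=; apply: eq_bigr => e _; rewrite inE.
    by case: (e \in E) => /=; rewrite ?mulr1 ?mul1r.
  by rewrite big_mkcond [RHS]pair_big /=; apply: eq_bigr => -[e p] _.
rewrite (eq_bigr _ (fun S _ => HS S)).
rewrite -bigA_distr_bigA /=.
have HK : forall e, \sum_X K e X = \prod_p (if (e, p) \in Q then a else 1).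
  move=> e; case: (boolP (e \in E)) => He.
    have -> : \sum_X K e X = \sum_(X : {set 'I_(@redN V k E) * 'I_(@redN V k E)})
       \prod_(p : 'I_(@redN V k E) * 'I_(@redN V k E)) (w (p \in X) *
          (if (e, p) \in Q then (p \in X)%:R else 1)).
      by apply: eq_bigr => X _; rewrite /K He big_split.
    rewrite (sum_set_prod _ _ (fun p b => w b * (if (e, p) \in Q then b%:R else 1))).
    apply: eq_bigr => p _; rewrite /w.
    by case: ((e, p) \in Q); rewrite /= ?mulr1 ?mulr0 ?addr0 // addrC subrK.
  have HQe : forall p, ((e, p) \in Q) = false.
    by move=> p; apply/negbTE; apply: contra He => /HQ.
  rewrite [RHS]big1; last by move=> p _; rewrite HQe.
  rewrite (bigD1 set0) //= big1.
    by rewrite /K (negbTE He) eqxx big1 ?mulr1 ?addr0 // => p _; rewrite HQe.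
  move=> X /negbTE HX; rewrite /K (negbTE He) HX mul0r //.
rewrite (eq_bigr _ (fun e _ => HK e)) pair_big /=.
by rewrite -prod_if_card; apply: eq_bigr => -[e p].
Qed.

Lemma count_ffun (R : realFieldType) (V J : finType) (u v : V) (i j : J)
  (huv : u != v) :
  \sum_(f : {ffun V -> J}) (((f u == i) && (f v == j))%:R : R) =
  \prod_(w | (w != u) && (w != v)) (#|J|%:R : R).
Proof.
have hvu : (v == u) = false by rewrite eq_sym (negbTE huv).
pose H w (y : J) : R := if w == u then (y == i)%:R else if w == v then (y == j)%:R else 1.
have E1 : forall f : {ffun V -> J},
    (((f u == i) && (f v == j))%:R : R) = \prod_w H w (f w).
  move=> f; rewrite (bigD1 u) //= (bigD1 v) /=; last by rewrite eq_sym.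
  rewrite big1; last by move=> w /andP[/negbTE h1 /negbTE h2]; rewrite /H h1 h2.
  rewrite /H eqxx hvu mulr1.
  rewrite eqxx.
  by case: (f u == i); case: (f v == j); rewrite /= ?mulr1 ?mul1r ?mulr0 ?mul0r.
rewrite (eq_bigr _ (fun f _ => E1 f)) -bigA_distr_bigA /=.
rewrite (bigD1 u) //= (bigD1 v) /=; last by rewrite eq_sym.
rewrite /H eqxx hvu eqxx !sum_ind_eq !mul1r.
apply: eq_bigr => w /andP[/negbTE h1 /negbTE h2]; rewrite h1 h2.
by rewrite sumr_const.
Qed.

Lemma pow_split (R : realFieldType) (V : finType) (c : R) (u v : V)
  (huv : u != v) :
  c ^+ #|V| = c ^+ 2 * \prod_(w | (w != u) && (w != v)) c.
Proof.
rewrite -prod_constT (bigD1 u) //= (bigD1 v) /=; last by rewrite eq_sym.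
by rewrite mulrA expr2.
Qed.

Lemma avg_bound (R : realFieldType) (V : finType) (k : nat)
  (E : {set V * V}) (pi : V * V -> {set 'I_k * 'I_k})
  (hE : loopless E)
  (phi : V * 'I_(@redN V k E) -> V * 'I_k * 'I_(@redN V k E)) :
  \sum_(x : (V * V) * ('I_(@redN V k E) * 'I_(@redN V k E)))
     (((x.1 \in E) && (((phi (x.1.1, x.2.1)).1.2, (phi (x.1.2, x.2.2)).1.2)
          \in pi x.1))%:R : R)
  <= (#|E|)%:R * ((@redN V k E)%:R ^+ 2) * @OPT_LC R V k E pi.
Proof.
set N := @redN V k E.
pose G (e : V * V) (p : 'I_N * 'I_N) : bool :=
  ((phi (e.1, p.1)).1.2, (phi (e.2, p.2)).1.2) \in pi e.
have -> : \sum_(x : (V * V) * ('I_N * 'I_N))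
     (((x.1 \in E) && (((phi (x.1.1, x.2.1)).1.2, (phi (x.1.2, x.2.2)).1.2)
          \in pi x.1))%:R : R) = \sum_(e in E) \sum_p ((G e p)%:R : R).
  transitivity (\sum_e \sum_p ((((e \in E) && G e p))%:R : R)).
    by rewrite pair_big /=; apply: eq_bigr => -[e p].
  rewrite [RHS]big_mkcond /=; apply: eq_bigr => e _.
  by case: (e \in E) => //; rewrite big1.
have hE' : forall e, e \in E -> e.1 != e.2.
  by move=> e he; move/forall_inP: hE; apply.
case: (posnP N) => HN.
  have -> : (N%:R : R) = 0 by rewrite HN.
  rewrite expr0n /= mulr0 mul0r big1 // => e _.
  by apply: big1 => p _; exfalso; have := ltn_ord p.1; move: (nat_of_ord p.1) => m; rewrite HN.
set Nr : R := N%:R.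
have Nr0 : 0 < Nr by rewrite ltr0n.
set C := Nr ^+ (#|V| - 2).
have C0 : 0 < C by rewrite exprn_gt0.
have HC : forall u v : V, u != v -> \prod_(w | (w != u) && (w != v)) Nr = C.
  move=> u v huv; apply: (mulfI (expf_neq0 2 (lt0r_neq0 Nr0))).
  rewrite -pow_split // -exprD subnKC //.
  have := subset_leq_card (subsetT [set u; v]).
  by rewrite cards2 huv cardsT.
have Claim1 : forall e, e \in E -> (\sum_p ((G e p)%:R : R)) * C =
    \sum_(f : {ffun V -> 'I_N}) ((G e (f e.1, f e.2))%:R : R).
  move=> e he.
  transitivity (\sum_(f : {ffun V -> 'I_N}) \sum_p
      ((G e p)%:R * (((f e.1 == p.1) && (f e.2 == p.2))%:R : R))); last first.
    apply: eq_bigr => f _.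
    rewrite (bigD1 (f e.1, f e.2)) //= !eqxx mulr1 big1 ?addr0 // => -[a b] hp.
    suff -> : (f e.1 == a) && (f e.2 == b) = false by rewrite mulr0.
    by apply/negbTE; apply: contra hp => /andP[/eqP <- /eqP <-].
  rewrite exchange_big mulr_suml; apply: eq_bigr => p _.
  rewrite -mulr_sumr count_ffun ?hE' //.
  by rewrite card_ord HC ?hE'.
have Claim2 : forall f : {ffun V -> 'I_N},
    \sum_(e in E) ((G e (f e.1, f e.2))%:R : R) <= (#|E|)%:R * @OPT_LC R V k E pi.
  move=> f.
  pose L : {ffun V -> 'I_k} := [ffun w => (phi (w, f w)).1.2].
  have -> : \sum_(e in E) ((G e (f e.1, f e.2))%:R : R) =
      (#|[set e in E | (L e.1, L e.2) \in pi e]|)%:R.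
    rewrite -sum1_card natr_sum big_mkcond [RHS]big_mkcond /=.
    apply: eq_bigr => e _; rewrite inE /G /L !ffunE.
    by case: (e \in E); case: (_ \in pi e).
  have hV := le_bigmaxR _ _ (@Val_LC R V k E pi) L.
  case: (posnP #|E|) => HE.
    have Hs : [set e in E | (L e.1, L e.2) \in pi e] \subset E.
      by apply/subsetP => e; rewrite inE => /andP[].
    by move/subset_leq_card: Hs; rewrite HE leqn0 => /eqP ->; rewrite mul0r.
  apply: le_trans (_ : (#|E|)%:R * @Val_LC R V k E pi L <= _); last first.
    by rewrite ler_wpM2l ?ler0n.
  by rewrite /Val_LC mulrC divfK // pnatr_eq0 -lt0n HE.
rewrite -(ler_pM2r C0).
rewrite mulr_suml (eq_bigr _ Claim1) exchange_big /=.
apply: le_trans (ler_sum _ (fun f _ => Claim2 f)) _.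
rewrite sumr_const card_ffun card_ord -(mulr_natr (_ * _) (N ^ #|V|)) natrX -/Nr.
case: (set_0Vmem E) => [E0|[e he]].
  by rewrite E0 cards0 !mul0r.
rewrite (pow_split _ _ Nr _ _ (hE' e he)) HC ?hE' //.
by rewrite le_eqVlt; apply/orP; left; apply/eqP; ring.
Qed.

Theorem mainTheorem6 (R : realFieldType) (V : finType) (k : nat)
  (E : {set V * V}) (pi : V * V -> {set 'I_k * 'I_k})
  (hE : loopless E)
  (phi : V * 'I_(@redN V k E) -> V * 'I_k * 'I_(@redN V k E))
  (hphi : injective phi) :
  @expVal_QAP R V k E pi phi <=
    @redAlpha R V * (#|E|)%:R * ((@redN V k E)%:R ^+ 2)
      * (@OPT_LC R V k E pi + @redAlpha R V).
Proof.
set N := @redN V k E.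
set a := @redAlpha R V.
have a0 : 0 <= a by rewrite /a /redAlpha invr_ge0 ler0n.
pose T := ((V * V) * ('I_N * 'I_N))%type.
pose y (x : T) : T :=
  (((phi (x.1.1, x.2.1)).1.1, (phi (x.1.2, x.2.2)).1.1),
   ((phi (x.1.1, x.2.1)).2, (phi (x.1.2, x.2.2)).2)).
pose D (x : T) : bool := [&& x.1 \in E, (y x).1 \in E &
   ((phi (x.1.1, x.2.1)).1.2, (phi (x.1.2, x.2.2)).1.2) \in pi (y x).1].
have M1 : forall S : @choiceT V k E, ((@Val_QAP V k E pi S phi)%:R : R) =
   \sum_(x : T) (D x)%:R * ((x.2 \in S x.1)%:R * (((y x).2 \in S (y x).1)%:R)).
  move=> S; rewrite /Val_QAP natr_sum big_mkcond /=.
  rewrite (reindex (fun x : T => ((x.1.1, x.2.1), (x.1.2, x.2.2)))) /=; last first.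
    exists (fun ab : (V * 'I_N) * (V * 'I_N) => ((ab.1.1, ab.2.1), (ab.1.2, ab.2.2))).
      by move=> -[[u v] [i j]].
    by move=> -[[u i] [v j]].
  apply: eq_bigr => -[[u v] [i j]] _; rewrite /D /y /= !inE /=.
  case: ((u, v) \in E); case: ((i, j) \in S (u, v)); case: (_ \in S _); case: (_ \in pi _); case: (_ \in E); by rewrite /= ?mulr0 ?mul0r ?mulr1 ?mul1r.
rewrite /expVal_QAP.
have M2 : \sum_(S : @choiceT V k E) @probS R V k E S * (@Val_QAP V k E pi S phi)%:R =
   \sum_(x : T) (D x)%:R * \sum_(S : @choiceT V k E) @probS R V k E S *
       ((x.2 \in S x.1)%:R * (((y x).2 \in S (y x).1)%:R)).
  under eq_bigr do rewrite M1 mulr_sumr.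
  rewrite exchange_big; apply: eq_bigr => x _; rewrite mulr_sumr.
  by apply: eq_bigr => S _; rewrite mulrCA.
rewrite M2.
pose P (x : T) : bool := (x.1 \in E) &&
   (((phi (x.1.1, x.2.1)).1.2, (phi (x.1.2, x.2.2)).1.2) \in pi x.1).
have M3 : forall x : T, (D x)%:R * \sum_(S : @choiceT V k E) @probS R V k E S *
       ((x.2 \in S x.1)%:R * (((y x).2 \in S (y x).1)%:R))
    <= (x.1 \in E)%:R * a ^+ 2 + a * (P x)%:R.
  move=> x; case HD: (D x).
    move: HD; rewrite /D => /and3P[h1 h2 h3]; rewrite mul1r.
    have -> : \sum_(S : @choiceT V k E) @probS R V k E S *
       ((x.2 \in S x.1)%:R * (((y x).2 \in S (y x).1)%:R)) = a ^+ #|[set x; y x]|.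
      rewrite -(expect_ind _ _ _ _ [set x; y x]); last first.
        by move=> z; rewrite !inE => /orP[/eqP -> | /eqP ->].
      apply: eq_bigr => S _; congr (_ * _).
      case: (boolP (x == y x)) => Hxy.
        rewrite -(eqP Hxy) setUid big_set1.
        by case: (_ \in _); rewrite ?mulr1 ?mulr0.
      by rewrite big_setU1 ?inE // big_set1.
    rewrite cards2 /P h1 mul1r /=.
    case: (boolP (x != y x)) => Hxy /=.
      by rewrite lerDl mulr_ge0 ?ler0n.
    have e1 : (y x).1 = x.1 by rewrite -(eqP (negbNE Hxy)).
    rewrite e1 in h3; rewrite h3 mulr1 expr1.
    by rewrite lerDr exprn_ge0.
  by rewrite mul0r addr_ge0 ?mulr_ge0 ?exprn_ge0 ?ler0n.
apply: le_trans (ler_sum _ (fun x _ => M3 x)) _.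
have M4 : \sum_(x : T) (((x.1 \in E)%:R : R)) = (#|E|)%:R * N%:R ^+ 2.
  transitivity (\sum_(e : V * V) \sum_(p : 'I_N * 'I_N) (((e \in E)%:R : R))).
    by rewrite pair_big /=; apply: eq_bigr => -[e p].
  under eq_bigr do rewrite sumr_const card_prod card_ord -(mulr_natr _ (N * N)).
  rewrite -mulr_suml natrM expr2; congr (_ * _).
  rewrite [RHS](_ : _ = \sum_(e in E) (1 : R)); last by rewrite sumr_const.
  by rewrite [RHS]big_mkcond; apply: eq_bigr => e _; case: (e \in E).
rewrite big_split /= -mulr_suml -mulr_sumr M4.
have Hb := @avg_bound R V k E pi hE phi.
have Hb' := ler_wpM2l a0 Hb.
set B := \sum_i (P i)%:R.
rewrite -/B in Hb'.
set O := @OPT_LC R V k E pi in Hb' *.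
set c := (#|E|)%:R * N%:R ^+ 2 in Hb' *.
have -> : a * (#|E|)%:R * N%:R ^+ 2 * (O + a) = c * a ^+ 2 + a * (c * O) by rewrite /c; ring.
by rewrite lerD2l.
Qed.
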